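(* Let $n\ge 0$ be an integer and for $k\in\mathbb{Z}_+$ let $$v_k(t)=c_k\,e^{-\frac{t^{2n+2}}{2n+2}}L^{(-\frac{1}{2n+2})}_{k}\!\left(\frac{t^{2n+2}}{n+1}\right),\qquad w_k(t)=d_k\,e^{-\frac{t^{2n+2}}{2n+2}}\,t\,L^{(\frac{1}{2n+2})}_{k}\!\left(\frac{t^{2n+2}}{n+1}\right),$$ with $c_k,d_k>0$ chosen so that $\|t^nv_k\|_{L^2(\mathbb{R})}=\|t^nw_k\|_{L^2(\mathbb{R})}=1$, and let $E_k=4k(n+1)+2n+1$. There exists a constant $C_0>0$ such that for all $k\in\mathbb{Z}_+$ $$\|v_k\|_{L^\infty(\mathbb{R})}\le C_0E_k^{\frac32+\frac{1}{4n+4}},\qquad \|w_k\|_{L^\infty(\mathbb{R})}\le C_0E_k^{\frac32+\frac{1}{4n+4}}.$$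
   Context: $L^{(a)}_k$ denotes the generalized Laguerre polynomial of degree $k$ and parameter $a$. These functions solve $-u''+t^{2(2n+1)}u=E\,t^{2n}u$, with $E=E_k$ for $v_k$ and $E=4k(n+1)+2n+3$ for $w_k$. *)

(* Defs.v *)
From Stdlib Require Import Reals.
From Coquelicot Require Import Coquelicot.
Open Scope R_scope.

Fixpoint gbinom (x : R) (m : nat) : R :=
  match m with
  | O => 1
  | S m' => gbinom x m' * (x - INR m') / INR (S m')
  end.

Definition laguerre (k : nat) (a x : R) : R :=
  sum_f_R0 (fun i => (-1) ^ i * gbinom (INR k + a) (k - i) * x ^ i / INR (Factorial.fact i)) k.

(* Unnormalized functions (without the constants c_k, d_k). *)
Definition v_unnorm (n k : nat) (t : R) : R :=
  exp (- t ^ (2 * n + 2) / INR (2 * n + 2))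
  * laguerre k (- / INR (2 * n + 2)) (t ^ (2 * n + 2) / INR (n + 1)).

Definition w_unnorm (n k : nat) (t : R) : R :=
  exp (- t ^ (2 * n + 2) / INR (2 * n + 2)) * t
  * laguerre k (/ INR (2 * n + 2)) (t ^ (2 * n + 2) / INR (n + 1)).

Definition Ek (n k : nat) : R := INR (4 * k * (n + 1) + 2 * n + 1).

Definition L2_normalized (f : R -> R) : Prop :=
  is_RInt_gen (fun t => (f t) ^ 2) (Rbar_locally m_infty) (Rbar_locally p_infty) 1.

(* Main.v *)
Require Import Defs.
From Stdlib Require Import Reals.
From Coquelicot Require Import Coquelicot.
From Stdlib Require Import Lra Lia.
Open Scope R_scope.

Lemma RInt_gen_bound (F : R -> R) (l u v : R) :
  (forall x, continuous F x) -> (forall x, 0 <= F x) -> u <= v ->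
  is_RInt_gen F (Rbar_locally m_infty) (Rbar_locally p_infty) l ->
  RInt F u v <= l.
Proof.
  intros Hc Hp Huv H.
  destruct (Rle_or_lt (RInt F u v) l) as [h|h]; [exact h|exfalso].
  assert (Hex : forall a b, ex_RInt F a b).
  { intros a b; apply (ex_RInt_continuous (V:=R_CompleteNormedModule)); intros; apply Hc. }
  set (eps := mkposreal _ (Rlt_Rminus _ _ h)).
  specialize (H (ball l eps) (locally_ball l eps)).
  destruct H as [Q R HQ HR HP].
  destruct HQ as [M1 HM1]. destruct HR as [M2 HM2].
  set (a := Rmin (M1 - 1) u). set (b := Rmax (M2 + 1) v).
  assert (ha : a < M1). { unfold a. generalize (Rmin_l (M1-1) u). lra. }
  assert (hb : M2 < b). { unfold b. generalize (Rmax_l (M2+1) v). lra. }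
  destruct (HP a b (HM1 a ha) (HM2 b hb)) as [y [Hy Hb]].
  simpl in Hy.
  assert (Hau : a <= u) by apply Rmin_r.
  assert (Hvb : v <= b) by apply Rmax_r.
  apply (is_RInt_unique (V:=R_CompleteNormedModule)) in Hy.
  assert (E1 : RInt F a b = RInt F a u + RInt F u v + RInt F v b).
  { rewrite <- (RInt_Chasles F a u b) by auto.
    rewrite <- (RInt_Chasles F u v b) by auto.
    unfold plus; simpl; ring. }
  assert (0 <= RInt F a u) by (apply RInt_ge_0; auto).
  assert (0 <= RInt F v b) by (apply RInt_ge_0; auto).
  unfold ball in Hb; simpl in Hb; unfold AbsRing_ball, abs, minus, plus, opp in Hb; simpl in Hb.
  apply Rabs_lt_between in Hb. simpl in Hb. lra.
Qed.

Lemma taylor_bound (f f1 f2 : R -> R) a s K :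
  (forall x, derivable_pt_lim f x (f1 x)) -> (forall x, derivable_pt_lim f1 x (f2 x)) ->
  f1 a = 0 -> a <= s -> (forall r, a <= r <= s -> Rabs (f2 r) <= K) ->
  Rabs (f s - f a) <= K * (s - a)^2.
Proof.
  intros D1 D2 H0 Has HK.
  destruct (Req_dec a s) as [e|ne].
  { subst. replace (f s - f s) with 0 by ring. rewrite Rabs_R0.
    assert (0 <= K). { apply Rle_trans with (Rabs (f2 s)); [apply Rabs_pos| apply HK; lra]. }
    simpl; nra. }
  destruct (MVT_cor2 f f1 a s) as [c [Hc1 Hc2]]; [lra| intros; apply D1|].
  destruct (MVT_cor2 f1 f2 a c) as [c' [Hc1' Hc2']]; [lra| intros; apply D2|].
  rewrite H0 in Hc1'. rewrite Hc1.
  assert (Hf1c : Rabs (f1 c) <= K * (s - a)).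
  { replace (f1 c) with (f1 c - 0) by ring. rewrite Hc1'.
    rewrite Rabs_mult. rewrite (Rabs_right (c - a)) by lra.
    assert (Rabs (f2 c') <= K) by (apply HK; lra).
    assert (0 <= Rabs (f2 c')) by apply Rabs_pos. nra. }
  rewrite Rabs_mult. rewrite (Rabs_right (s - a)) by lra. simpl. nra.
Qed.

Lemma max_deriv0 (f f1 : R -> R) T :
  (forall x, derivable_pt_lim f x (f1 x)) -> (forall s, (f s)^2 <= (f T)^2) ->
  f T <> 0 -> f1 T = 0.
Proof.
  intros D1 Hm Hn.
  assert (Dg : derivable_pt_lim (fun x => f x * f x) T (f1 T * f T + f T * f1 T)).
  { apply (derivable_pt_lim_mult f f). apply D1. apply D1. }
  pose (pr := exist (fun l => derivable_pt_abs (fun x => f x * f x) T l) _ Dg : derivable_pt (fun x => f x * f x) T).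
  assert (H := deriv_maximum (fun x => f x * f x) (T - 1) (T + 1) T pr).
  simpl in H. assert (f1 T * f T + f T * f1 T = 0).
  { apply H; try lra. intros x _ _. specialize (Hm x). simpl in Hm. lra. }
  assert (f1 T * (2 * f T) = 0) by lra.
  apply Rmult_integral in H1. destruct H1; auto. lra.
Qed.

Lemma second_deriv_test (f f1 f2 : R -> R) T :
  (forall x, derivable_pt_lim f x (f1 x)) -> (forall x, derivable_pt_lim f1 x (f2 x)) ->
  (forall s, (f s)^2 <= (f T)^2) -> 0 < f T -> f1 T = 0 -> f2 T <= 0.
Proof.
  intros D1 D2 Hm Hp H0.
  destruct (Rle_or_lt (f2 T) 0) as [h|h]; [exact h|exfalso].
  destruct (D2 T (f2 T) h) as [del Hdel].
  assert (Hpos : forall h, 0 < h < del -> 0 < f1 (T + h)).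
  { intros h0 Hh0. assert (h0 <> 0) by lra.
    assert (Rabs h0 < del) by (rewrite Rabs_right; lra).
    specialize (Hdel h0 H H1). rewrite H0 in Hdel.
    apply Rabs_lt_between in Hdel.
    destruct Hdel as [Hd _].
    replace ((f1 (T + h0) - 0) / h0) with (f1 (T + h0) / h0) in Hd by (field; lra).
    assert (0 < f1 (T + h0) / h0) by lra.
    apply Rmult_lt_reg_r with (/ h0). apply Rinv_0_lt_compat; lra.
    rewrite Rmult_0_l. exact H2. }
  assert (Hd0 : 0 < del) by apply cond_pos.
  destruct (MVT_cor2 f f1 T (T + del/2)) as [c [Hc1 Hc2]]; [lra| intros; apply D1|].
  assert (0 < f1 c). { replace c with (T + (c - T)) by ring. apply Hpos. lra. }
  assert (f (T + del/2) > f T) by nra.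
  specialize (Hm (T + del/2)). simpl in Hm. nra.
Qed.

Lemma RInt_lower (F : R -> R) u v m :
  u <= v -> (forall x, continuous F x) -> (forall x, u <= x <= v -> m <= F x) ->
  (v - u) * m <= RInt F u v.
Proof.
  intros Huv Hc Hm.
  assert (RInt (fun _ => m) u v <= RInt F u v).
  { apply RInt_le; auto.
    - apply ex_RInt_const.
    - apply (ex_RInt_continuous (V:=R_CompleteNormedModule)); intros; apply Hc.
    - intros; apply Hm; lra. }
  rewrite RInt_const in H. exact H.
Qed.

Lemma p2 m : 2^(2*m) = 4^m.
Proof. rewrite pow_mult. f_equal. ring. Qed.
Lemma p22 m : 2^(2*m+2) = 4^(m+1).
Proof. replace (2*m+2)%nat with (2*(m+1))%nat by lia. apply p2. Qed.
Lemma p4a n : 4^(2*n+1) = 4^n * 4^(n+1).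
Proof. rewrite <- pow_add. f_equal. lia. Qed.
Lemma p4b n : 4^(2*n+2) = 4 * 4^(2*n+1).
Proof. replace (2*n+2)%nat with (S (2*n+1)) by lia. simpl. ring. Qed.
Lemma p4c n : 4^(3*n+4) = 4 * 4^(n+1) * 4^(2*n+2).
Proof. rewrite Rmult_assoc, <- pow_add. replace (3*n+4)%nat with (S (n+1+(2*n+2))) by lia. simpl. ring. Qed.
Lemma pge1 m : 1 <= 4^m.
Proof. apply pow_R1_Rle. lra. Qed.
Lemma powS2 x m : x^(2*m+2) = x^(2*m) * x^2.
Proof. apply pow_add. Qed.
Lemma powS1 x m : x^(2*m+2) = x^(2*m+1) * x.
Proof. replace (2*m+2)%nat with (S (2*m+1)) by lia. simpl. ring. Qed.
Lemma powS0 x m : x^(2*m+1) = x^(2*m) * x.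
Proof. replace (2*m+1)%nat with (S (2*m)) by lia. simpl. ring. Qed.

Definition Kc (n : nat) : R := 4^(3*n+4).

Lemma core_pos (n : nat) (E : R) (f f1 f2 : R -> R) (T : R) :
  1 <= E ->
  (forall x, derivable_pt_lim f x (f1 x)) -> (forall x, derivable_pt_lim f1 x (f2 x)) ->
  (forall x, f2 x = x^(2*n) * (x^(2*n+2) - E) * f x) ->
  (forall u v, u <= v -> RInt (fun s => (s^n * f s)^2) u v <= 1) ->
  (forall s, (f s)^2 <= (f T)^2) -> 0 <= T -> 0 < f T ->
  (f T)^2 <= Kc n * E^2.
Proof.
  intros HE D1 D2 Hode Hint Hm HT Hp.
  set (M := f T) in *.
  assert (Habs : forall s, Rabs (f s) <= M).
  { intros s. specialize (Hm s). apply Rabs_le. split; nra. }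
  assert (Hcont : forall x, continuous (fun s => (s^n * f s)^2) x).
  { intros x. apply (ex_derive_continuous (K:=R_AbsRing) (V:=R_NormedModule)). auto_derive. repeat split; auto.
    exists (f1 x). apply is_derive_Reals. apply D1. }
  assert (Hsq : forall s, (s^n * f s)^2 = s^(2*n) * (f s)^2).
  { intros s. rewrite Rpow_mult_distr, <- pow_mult. replace (n*2)%nat with (2*n)%nat by lia. reflexivity. }
  set (c := 4^(2*n+2)).
  assert (Hc1 : 1 <= c) by apply pge1.
  assert (HcE : 1 <= c * E) by nra.
  set (eta := Rpower (c*E) (- / INR (2*n+2))).
  assert (Heta0 : 0 < eta) by (unfold eta, Rpower; apply exp_pos).
  assert (HINR : 0 < INR (2*n+2)) by (apply lt_0_INR; lia).
  assert (Heta1 : eta <= 1).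
  { unfold eta. rewrite Rpower_Ropp.
    assert (1 <= Rpower (c*E) (/ INR (2*n+2))).
    { rewrite <- (Rpower_O (c*E)) by lra. apply Rle_Rpower; auto.
      left; apply Rinv_0_lt_compat; auto. }
    rewrite <- Rinv_1. apply Rinv_le_contravar; lra. }
  assert (Heta2 : eta^(2*n+2) = / (c*E)).
  { unfold eta. rewrite <- Rpower_pow by (unfold Rpower; apply exp_pos).
    rewrite Rpower_mult. replace (- / INR (2*n+2) * INR (2*n+2)) with (-(1)) by (field; lra).
    rewrite Rpower_Ropp, Rpower_1; lra. }
  assert (HA : 1 <= eta^(2*n+1) * (c * E)).
  { assert (eta^(2*n+2) <= eta^(2*n+1)).
    { rewrite powS1. assert (0 < eta^(2*n+1)) by (apply pow_lt; lra). nra. }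
    rewrite Heta2 in H. apply Rmult_le_reg_r with (/(c*E)).
    apply Rinv_0_lt_compat; lra.
    rewrite Rmult_1_l, Rmult_assoc, Rinv_r, Rmult_1_r by lra. exact H. }
  assert (H4n : 1 <= 4^n) by apply pge1.
  assert (H4n1 : 1 <= 4^(n+1)) by apply pge1.
  assert (HK : Kc n = 4 * 4^(n+1) * c) by (unfold Kc, c; apply p4c).
  assert (Hc4 : c = 4 * (4^n * 4^(n+1))) by (unfold c; rewrite p4b, p4a; ring).
  destruct (Rlt_or_le T eta) as [Hlt | Hge].
  -
    assert (Hr : forall r, T <= r <= T + eta ->
              Rabs (f2 r) <= 2 * 4^(2*n+1) * eta^(2*n) * E * M).
    { intros r Hr. rewrite Hode, !Rabs_mult.
      assert (0 <= r) by lra.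
      rewrite (Rabs_right (r^(2*n))) by (apply Rle_ge, pow_le; lra).
      assert (B1 : r^(2*n) <= 4^n * eta^(2*n)).
      { rewrite <- p2, <- Rpow_mult_distr. apply pow_incr. lra. }
      assert (B2 : r^(2*n+2) <= 4^(n+1)).
      { rewrite <- p22. apply pow_incr. lra. }
      assert (B3 : Rabs (r^(2*n+2) - E) <= 2 * 4^(n+1) * E).
      { assert (0 <= r^(2*n+2)) by (apply pow_le; lra).
        apply Rabs_le; split; nra. }
      assert (0 <= r^(2*n)) by (apply pow_le; lra).
      assert (0 <= Rabs (f r)) by apply Rabs_pos.
      assert (0 <= Rabs (r ^ (2 * n + 2) - E)) by apply Rabs_pos.
      specialize (Habs r).
      rewrite p4a.
      apply Rle_trans with ((4^n * eta^(2*n)) * (2 * 4^(n+1) * E) * M).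
      + apply Rmult_le_compat; auto. apply Rmult_le_pos; auto.
        apply Rmult_le_compat; auto.
      + right; ring. }
    assert (Hge2 : forall r, T <= r <= T + eta -> M/2 <= f r).
    { intros r Hr0.
      assert (Hd := taylor_bound f f1 f2 T r _ D1 D2 (max_deriv0 f f1 T D1 Hm (not_eq_sym (Rlt_not_eq _ _ Hp))) ltac:(lra)
                    (fun r' Hr' => Hr r' ltac:(lra))).
      assert (Hdist : (r - T)^2 <= eta^2).
      { apply pow_incr; lra. }
      assert (0 <= 2 * 4^(2*n+1) * eta^(2*n) * E * M).
      { assert (0 < eta^(2*n)) by (apply pow_lt; lra).
        assert (0 < 4^(2*n+1)) by (apply pow_lt; lra). 
        apply Rmult_le_pos; [|lra]. apply Rmult_le_pos; [|lra]. apply Rmult_le_pos; lra. }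
      assert (Hkey : 2 * 4^(2*n+1) * eta^(2*n) * E * M * eta^2 = M/2).
      { replace (2 * 4^(2*n+1) * eta^(2*n) * E * M * eta^2)
          with (2 * 4^(2*n+1) * (eta^(2*n) * eta^2) * E * M) by ring.
        rewrite <- powS2, Heta2. unfold c. rewrite p4b. field.
        split; [lra|]. assert (0 < 4^(2*n+1)) by (apply pow_lt; lra). lra. }
      assert (2 * 4^(2*n+1) * eta^(2*n) * E * M * (r - T)^2 <= 2 * 4^(2*n+1) * eta^(2*n) * E * M * eta^2)
        by (apply Rmult_le_compat_l; auto).
      apply Rabs_le_between in Hd. change (f T) with M in Hd. lra. }
    assert (Hint2 := Hint (T + eta/2) (T + eta) ltac:(lra)).
    assert (Hlow := RInt_lower _ (T + eta/2) (T + eta) ((eta/2)^(2*n) * (M/2)^2) ltac:(lra) Hcont).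
    assert (Hl : (T + eta - (T + eta/2)) * ((eta/2)^(2*n) * (M/2)^2) <= 1).
    { eapply Rle_trans; [apply Hlow|exact Hint2].
      intros x Hx. rewrite Hsq. apply Rmult_le_compat.
      - apply pow_le; lra.
      - simpl; nra.
      - apply pow_incr; lra.
      - specialize (Hge2 x ltac:(lra)). simpl. nra. }
    replace ((T + eta - (T + eta/2)) * ((eta/2)^(2*n) * (M/2)^2))
      with (eta^(2*n+1) * M^2 / (4 * 2^(2*n+1))) in Hl
      by (unfold Rdiv; rewrite !powS0, !Rpow_mult_distr, !pow_inv; simpl; field; repeat split; try apply pow_nonzero; lra).
    assert (H2 : 2^(2*n+1) <= 4^(n+1)).
    { rewrite <- p22, powS1. assert (1 <= 2^(2*n+1)) by (apply pow_R1_Rle; lra). lra. }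
    assert (0 < 2^(2*n+1)) by (apply pow_lt; lra).
    assert (Hl' : eta^(2*n+1) * M^2 <= 4 * 2^(2*n+1)).
    { apply Rmult_le_reg_r with (/ (4 * 2^(2*n+1))).
      apply Rinv_0_lt_compat; lra.
      rewrite Rinv_r by lra. exact Hl. }
    assert (M^2 <= 4 * 2^(2*n+1) * (c*E)).
    { assert (0 <= M^2) by (apply pow_le; lra). nra. }
    rewrite HK. assert (E <= E^2) by (simpl; nra).
    assert (0 < c) by lra.
    assert (4 * 2^(2*n+1) * (c*E) <= 4 * 4^(n+1) * (c * E)).
    { apply Rmult_le_compat_r; nra. }
    assert (4 * 4^(n+1) * (c * E) <= 4 * 4^(n+1) * c * E^2).
    { replace (4 * 4^(n+1) * (c * E)) with ((4 * 4^(n+1) * c) * E) by ring.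
      apply Rmult_le_compat_l; nra. }
    lra.
  -
    assert (HT0 : 0 < T) by lra.
    assert (Hd0 := max_deriv0 f f1 T D1 Hm (not_eq_sym (Rlt_not_eq _ _ Hp))).
    assert (HQ := second_deriv_test f f1 f2 T D1 D2 Hm Hp Hd0).
    rewrite Hode in HQ. change (f T) with M in HQ.
    assert (HTE : T^(2*n+2) <= E).
    { assert (0 < T^(2*n)) by (apply pow_lt; lra).
      assert (0 < T^(2*n) * M) by nra.
      destruct (Rle_or_lt (T^(2*n+2)) E); auto. nra. }
    set (D := 4^(n+1)).
    set (eta' := T / (D * E)).
    assert (HDE : 1 <= D * E) by (unfold D; nra).
    assert (Heta'0 : 0 < eta') by (unfold eta'; apply Rdiv_lt_0_compat; lra).
    assert (Heta'T : eta' <= T).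
    { unfold eta'. apply Rmult_le_reg_r with (D*E); [lra|].
      unfold Rdiv. rewrite Rmult_assoc, Rinv_l by lra. nra. }
    assert (Hr : forall r, T <= r <= T + eta' ->
              Rabs (f2 r) <= 2 * 4^(2*n+1) * T^(2*n) * E * M).
    { intros r Hr. rewrite Hode, !Rabs_mult.
      assert (0 <= r) by lra.
      rewrite (Rabs_right (r^(2*n))) by (apply Rle_ge, pow_le; lra).
      assert (B1 : r^(2*n) <= 4^n * T^(2*n)).
      { rewrite <- p2, <- Rpow_mult_distr. apply pow_incr. lra. }
      assert (B2 : r^(2*n+2) <= 4^(n+1) * E).
      { apply Rle_trans with (4^(n+1) * T^(2*n+2)).
        rewrite <- p22, <- Rpow_mult_distr. apply pow_incr. lra.
        apply Rmult_le_compat_l; auto. lra. }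
      assert (B3 : Rabs (r^(2*n+2) - E) <= 2 * 4^(n+1) * E).
      { assert (0 <= r^(2*n+2)) by (apply pow_le; lra).
        apply Rabs_le; split; nra. }
      assert (0 <= r^(2*n)) by (apply pow_le; lra).
      assert (0 <= Rabs (f r)) by apply Rabs_pos.
      assert (0 <= Rabs (r ^ (2 * n + 2) - E)) by apply Rabs_pos.
      specialize (Habs r).
      rewrite p4a.
      apply Rle_trans with ((4^n * T^(2*n)) * (2 * 4^(n+1) * E) * M).
      + apply Rmult_le_compat; auto. apply Rmult_le_pos; auto.
        apply Rmult_le_compat; auto.
      + right; ring. }
    assert (Hge2 : forall r, T <= r <= T + eta' -> M/2 <= f r).
    { intros r Hr0.
      assert (Hd := taylor_bound f f1 f2 T r _ D1 D2 Hd0 ltac:(lra)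
                    (fun r' Hr' => Hr r' ltac:(lra))).
      assert (Hdist : (r - T)^2 <= eta'^2).
      { apply pow_incr; lra. }
      assert (0 < T^(2*n)) by (apply pow_lt; lra).
      assert (0 < 4^(2*n+1)) by (apply pow_lt; lra).
      assert (0 <= 2 * 4^(2*n+1) * T^(2*n) * E * M).
      { apply Rmult_le_pos; [|lra]. apply Rmult_le_pos; [|lra]. apply Rmult_le_pos; lra. }
      assert (HD2 : D * D = 4 * 4^(2*n+1)) by (unfold D; rewrite <- pow_add, <- p4b; f_equal; lia).
      assert (HD0 : 0 < D) by (unfold D; lra).
      assert (Hkey' : 2 * 4^(2*n+1) * T^(2*n) * E * M * eta'^2 = (T^(2*n) * T^2 / E) * (M/2)).
      { unfold eta'. replace (4^(2*n+1)) with (D*D/4) by lra. field. lra. }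
      assert (HTE' : T^(2*n) * T^2 / E <= 1).
      { rewrite <- powS2. apply Rmult_le_reg_r with E; [lra|].
        unfold Rdiv. rewrite Rmult_assoc, Rinv_l, Rmult_1_r by lra. lra. }
      assert (Hkey : 2 * 4^(2*n+1) * T^(2*n) * E * M * eta'^2 <= M/2).
      { rewrite Hkey'. nra. }
      assert (2 * 4^(2*n+1) * T^(2*n) * E * M * (r - T)^2 <= 2 * 4^(2*n+1) * T^(2*n) * E * M * eta'^2)
        by (apply Rmult_le_compat_l; auto).
      apply Rabs_le_between in Hd. change (f T) with M in Hd. lra. }
    assert (Hint2 := Hint T (T + eta') ltac:(lra)).
    assert (Hlow := RInt_lower _ T (T + eta') (T^(2*n) * (M/2)^2) ltac:(lra) Hcont).
    assert (Hl : (T + eta' - T) * (T^(2*n) * (M/2)^2) <= 1).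
    { eapply Rle_trans; [apply Hlow|exact Hint2].
      intros x Hx. rewrite Hsq. apply Rmult_le_compat.
      - apply pow_le; lra.
      - simpl; nra.
      - apply pow_incr; lra.
      - specialize (Hge2 x ltac:(lra)). simpl. nra. }
    replace ((T + eta' - T) * (T^(2*n) * (M/2)^2))
      with (T^(2*n+1) * M^2 / (4 * (D * E))) in Hl
      by (assert (0 < D) by (unfold D; lra); unfold eta'; rewrite powS0; field; repeat split; lra).
    assert (HTeta : eta^(2*n+1) <= T^(2*n+1)) by (apply pow_incr; lra).
    assert (Hl' : T^(2*n+1) * M^2 <= 4 * (D * E)).
    { apply Rmult_le_reg_r with (/ (4 * (D * E))).
      apply Rinv_0_lt_compat; lra.
      rewrite Rinv_r by lra. exact Hl. }
    assert (0 <= M^2) by (apply pow_le; lra).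
    assert (M^2 <= 4 * (D*E) * (c*E)).
    { assert (M^2 * 1 <= M^2 * (eta^(2*n+1) * (c*E))) by (apply Rmult_le_compat_l; lra).
      assert (M^2 * (eta^(2*n+1) * (c*E)) <= M^2 * (T^(2*n+1) * (c*E))).
      { apply Rmult_le_compat_l; [lra|]. apply Rmult_le_compat_r; lra. }
      assert (M^2 * (T^(2*n+1) * (c*E)) = (T^(2*n+1) * M^2) * (c*E)) by ring.
      assert ((T^(2*n+1) * M^2) * (c*E) <= 4 * (D*E) * (c*E)) by (apply Rmult_le_compat_r; lra).
      lra. }
    rewrite HK. unfold D in *. simpl in *. nra.
Qed.

Lemma dpl_opp (f : R -> R) x l : derivable_pt_lim f x l -> derivable_pt_lim (fun y => - f y) x (- l).
Proof. intros H. apply (derivable_pt_lim_opp f x l H). Qed.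

Lemma Kc_ge1 n : 1 <= Kc n.
Proof. apply pge1. Qed.

Lemma core (n : nat) (E : R) (f f1 f2 : R -> R) :
  1 <= E ->
  (forall x, derivable_pt_lim f x (f1 x)) -> (forall x, derivable_pt_lim f1 x (f2 x)) ->
  (forall x, f2 x = x^(2*n) * (x^(2*n+2) - E) * f x) ->
  (forall u v, u <= v -> RInt (fun s => (s^n * f s)^2) u v <= 1) ->
  (forall s, (f (-s))^2 = (f s)^2) ->
  (forall eps, 0 < eps -> exists B, forall s, B <= Rabs s -> Rabs (f s) < eps) ->
  forall t, Rabs (f t) <= Kc n * E.
Proof.
  intros HE D1 D2 Hode Hint Hev Hdec t.
  assert (HK := Kc_ge1 n).
  destruct (Req_dec (f t) 0) as [h0|hn].
  { rewrite h0, Rabs_R0. nra. }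
  assert (Hft : 0 < Rabs (f t)) by (apply Rabs_pos_lt; auto).
  destruct (Hdec _ Hft) as [B HB].
  set (B2 := Rmax (Rabs B) (Rabs t)).
  assert (HB2 : 0 <= B2) by (unfold B2; apply Rle_trans with (Rabs t); [apply Rabs_pos|apply Rmax_r]).
  destruct (continuity_ab_maj (fun s => (f s)^2) (-B2) B2) as [Mx [HMx HMxI]]; [lra| |].
  { intros c0 _. apply derivable_continuous_pt.
    exists (f1 c0 * f c0 + f c0 * f1 c0).
    change (derivable_pt_lim (fun s => f s * (f s * 1)) c0 (f1 c0 * f c0 + f c0 * f1 c0)).
    assert (H := derivable_pt_lim_mult f f c0 (f1 c0) (f1 c0) (D1 c0) (D1 c0)).
    intros eps Heps. destruct (H eps Heps) as [d Hd]. exists d. intros h Hh1 Hh2.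
    specialize (Hd h Hh1 Hh2). unfold mult_fct in Hd. rewrite !Rmult_1_r. exact Hd. }
  assert (Htin : -B2 <= t <= B2).
  { assert (Rabs t <= B2) by apply Rmax_r. apply Rabs_le_between in H. exact H. }
  assert (Hm : forall s, (f s)^2 <= (f Mx)^2).
  { intros s. destruct (Rle_or_lt (Rabs s) B2) as [hs|hs].
    - apply HMx. apply Rabs_le_between in hs. exact hs.
    - assert (B <= Rabs s).
      { assert (B <= Rabs B) by apply RRle_abs.
        assert (Rabs B <= B2) by apply Rmax_l. lra. }
      specialize (HB s H).
      assert (f s ^ 2 < f t ^ 2).
      { rewrite <- !(pow2_abs (f s)), <- (pow2_abs (f t)).
        assert (0 <= Rabs (f s)) by apply Rabs_pos. simpl. nra. }
      specialize (HMx t Htin). simpl in *. lra. }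
  set (T := Rabs Mx).
  assert (HTM : (f T)^2 = (f Mx)^2).
  { unfold T. destruct (Rle_or_lt 0 Mx).
    - rewrite Rabs_right; lra.
    - rewrite Rabs_left by lra. apply Hev. }
  assert (HmT : forall s, (f s)^2 <= (f T)^2) by (intros; rewrite HTM; apply Hm).
  assert (HT0 : 0 <= T) by apply Rabs_pos.
  assert (Hbound : (f T)^2 <= Kc n * E^2).
  { destruct (Rtotal_order (f T) 0) as [Hneg|[Hz|Hpos]].
    - assert (H := core_pos n E (fun y => - f y) (fun y => - f1 y) (fun y => - f2 y) T HE
        (fun x => dpl_opp _ _ _ (D1 x)) (fun x => dpl_opp _ _ _ (D2 x))).
      cbv beta in H. replace ((- f T)^2) with ((f T)^2) in H by ring.
      apply H.
      + intros x. rewrite Hode. ring.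
      + intros u v Huv. erewrite RInt_ext. apply (Hint u v Huv). intros; simpl; ring.
      + intros s. replace ((- f s)^2) with ((f s)^2) by ring. apply HmT.
      + exact HT0.
      + lra.
    - exfalso. specialize (HmT t). rewrite Hz in HmT. simpl in HmT.
      assert (0 < f t * f t) by (apply Rsqr_pos_lt; auto). lra.
    - apply (core_pos n E f f1 f2 T HE D1 D2 Hode Hint HmT HT0 Hpos). }
  assert (Hft2 : (f t)^2 <= Kc n * E^2) by (specialize (HmT t); lra).
  destruct (Rle_or_lt (Rabs (f t)) (Kc n * E)) as [ok|bad]; auto.
  exfalso. rewrite <- pow2_abs in Hft2.
  assert (Kc n * E^2 <= (Kc n * E)^2) by (simpl; nra).
  assert ((Kc n * E)^2 < (Rabs (f t))^2).
  { simpl. assert (0 <= Kc n * E) by nra. nra. }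
  lra.
Qed.

Definition alpha (k : nat) (a : R) (i : nat) : R :=
  (-1)^i * gbinom (INR k + a) (k - i) / INR (Factorial.fact i).

Definition L0 k a x := sum_f_R0 (fun i => alpha k a i * x^i) k.
Definition L1 k a x := sum_f_R0 (fun i => alpha k a i * INR i * x^(pred i)) k.
Definition L2 k a x := sum_f_R0 (fun i => alpha k a i * INR i * INR (pred i) * x^(pred (pred i))) k.

Lemma laguerre_L0 k a x : laguerre k a x = L0 k a x.
Proof. unfold laguerre, L0, alpha. apply sum_eq. intros. unfold Rdiv. ring. Qed.

Lemma dsum (al : nat -> R) (g : nat -> nat) m x :
  derivable_pt_lim (fun y => sum_f_R0 (fun i => al i * y^(g i)) m) x
    (sum_f_R0 (fun i => al i * (INR (g i) * x^(pred (g i)))) m).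
Proof.
  induction m as [|m IH]; simpl.
  - apply (derivable_pt_lim_scal (fun y => y^(g 0%nat))). apply derivable_pt_lim_pow.
  - apply (derivable_pt_lim_plus (fun y => sum_f_R0 (fun i => al i * y^(g i)) m)
            (fun y => al (S m) * y^(g (S m)))); auto.
    apply (derivable_pt_lim_scal (fun y => y^(g (S m)))). apply derivable_pt_lim_pow.
Qed.

Lemma dL0 k a x : derivable_pt_lim (L0 k a) x (L1 k a x).
Proof.
  assert (H := dsum (alpha k a) (fun i => i) k x).
  unfold L0, L1. replace (sum_f_R0 (fun i => alpha k a i * INR i * x ^ Init.Nat.pred i) k)
    with (sum_f_R0 (fun i => alpha k a i * (INR i * x ^ Init.Nat.pred i)) k).
  exact H. apply sum_eq; intros; ring.
Qed.

Lemma dL1 k a x : derivable_pt_lim (L1 k a) x (L2 k a x).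
Proof.
  assert (H := dsum (fun i => alpha k a i * INR i) pred k x).
  unfold L1, L2.
  replace (sum_f_R0 (fun i => alpha k a i * INR i * INR (pred i) * x ^ pred (pred i)) k)
    with (sum_f_R0 (fun i => alpha k a i * INR i * (INR (pred i) * x ^ pred (pred i))) k).
  exact H. apply sum_eq; intros; ring.
Qed.

Lemma alpha_rec k a j : (j < k)%nat ->
  alpha k a (S j) * INR (S j) * (INR j + 1 + a) = - (INR k - INR j) * alpha k a j.
Proof.
  intros Hj. unfold alpha.
  remember (k - S j)%nat as m eqn:Hm.
  replace (k - j)%nat with (S m) by lia.
  assert (HmI : INR m = INR k - INR j - 1).
  { rewrite Hm, minus_INR by lia. rewrite S_INR. ring. }
  change (gbinom (INR k + a) (S m)) with (gbinom (INR k + a) m * (INR k + a - INR m) / INR (S m)).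
  rewrite (S_INR m), HmI.
  replace (Factorial.fact (S j)) with (S j * Factorial.fact j)%nat by reflexivity.
  rewrite mult_INR, S_INR.
  assert (INR (Factorial.fact j) <> 0) by apply INR_fact_neq_0.
  assert (INR k - INR j <> 0).
  { assert (INR j < INR k) by (apply lt_INR; lia). lra. }
  assert (INR j + 1 <> 0) by (generalize (pos_INR j); lra).
  replace (INR k - INR j - 1 + 1) with (INR k - INR j) by ring.
  simpl pow. field. auto.
Qed.

Lemma telescope (t u : nat -> R) m :
  t 0%nat = u 0%nat -> (forall j, (S j <= m)%nat -> t (S j) = u (S j) - u j) ->
  sum_f_R0 t m = u m.
Proof.
  intros H0 HS. induction m as [|m IH]; simpl; auto.
  rewrite IH by (intros; apply HS; lia). rewrite HS by lia. ring.
Qed.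

Lemma sum_comb (A B C : nat -> R) p q r m :
  p * sum_f_R0 A m + q * sum_f_R0 B m + r * sum_f_R0 C m =
  sum_f_R0 (fun i => p * A i + q * B i + r * C i) m.
Proof. induction m as [|m IH]; simpl; [ring|]. rewrite <- IH. ring. Qed.

Lemma laguerre_ode k a x :
  x * L2 k a x + (a + 1 - x) * L1 k a x + INR k * L0 k a x = 0.
Proof.
  unfold L0, L1, L2. rewrite sum_comb.
  set (u := fun i => (INR k - INR i) * alpha k a i * x^i).
  transitivity (u k). 2: { unfold u. ring. }
  apply telescope.
  - unfold u. simpl. ring.
  - intros j Hj. unfold u.
    assert (Hr := alpha_rec k a j ltac:(lia)).
    destruct j as [|j].
    + assert (Hr' : alpha k a 1 * INR 1 * (INR 0 + 1 + a) * x^0 = - (INR k - INR 0) * alpha k a 0 * x^0)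
        by (rewrite Hr; ring).
      simpl pred. simpl pow in *. simpl INR in *. lra.
    + assert (Hr' : alpha k a (S (S j)) * INR (S (S j)) * (INR (S j) + 1 + a) * x^(S j)
                    = - (INR k - INR (S j)) * alpha k a (S j) * x^(S j))
        by (rewrite Hr; ring).
      simpl pred. rewrite !S_INR in *. simpl pow in *. lra.
Qed.

Definition ee (n : nat) (t : R) := exp (- t^(2*n+2) / INR (2*n+2)).
Definition ph (n : nat) (t : R) := t^(2*n+2) / INR (n+1).

Lemma INR2 n : INR (2*n+2) = 2 * INR (n+1).
Proof. replace (2*n+2)%nat with (2*(n+1))%nat by lia. rewrite mult_INR. simpl. ring. Qed.
Lemma INRpos n : 0 < INR (n+1).
Proof. apply lt_0_INR; lia. Qed.

Lemma dee n t : derivable_pt_lim (ee n) t (- t^(2*n+1) * ee n t).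
Proof.
  apply is_derive_Reals. unfold ee.
  auto_derive. auto. replace (n + (n + 0) + 2)%nat with (2*n+2)%nat by lia. unfold Rdiv.
  replace (pred (2*n+2)) with (2*n+1)%nat by lia.
  assert (0 < INR (2*n+2)) by (apply lt_0_INR; lia).
  field. lra.
Qed.

Lemma dph n t : derivable_pt_lim (ph n) t (2 * t^(2*n+1)).
Proof.
  apply is_derive_Reals. unfold ph.
  auto_derive. auto. replace (n + (n + 0) + 2)%nat with (2*n+2)%nat by lia. unfold Rdiv.
  replace (pred (2*n+2)) with (2*n+1)%nat by lia.
  rewrite INR2. assert (H := INRpos n). field. lra.
Qed.

Lemma dpl_ext (f g : R -> R) x l l' :
  derivable_pt_lim f x l -> (forall y, f y = g y) -> l = l' -> derivable_pt_lim g x l'.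
Proof.
  intros H He Hl. subst l'. intros eps Heps. destruct (H eps Heps) as [d Hd].
  exists d. intros h Hh1 Hh2. rewrite <- !He. auto.
Qed.

Lemma dmul (f g : R -> R) x lf lg :
  derivable_pt_lim f x lf -> derivable_pt_lim g x lg ->
  derivable_pt_lim (fun y => f y * g y) x (lf * g x + f x * lg).
Proof. intros. apply (derivable_pt_lim_mult f g x lf lg); auto. Qed.

Lemma dsub (f g : R -> R) x lf lg :
  derivable_pt_lim f x lf -> derivable_pt_lim g x lg ->
  derivable_pt_lim (fun y => f y - g y) x (lf - lg).
Proof. intros. apply (derivable_pt_lim_minus f g x lf lg); auto. Qed.

Lemma dadd (f g : R -> R) x lf lg :
  derivable_pt_lim f x lf -> derivable_pt_lim g x lg ->
  derivable_pt_lim (fun y => f y + g y) x (lf + lg).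
Proof. intros. apply (derivable_pt_lim_plus f g x lf lg); auto. Qed.

Lemma dcst c x : derivable_pt_lim (fun _ => c) x 0.
Proof. apply derivable_pt_lim_const. Qed.

Lemma dpowt m x : derivable_pt_lim (fun y => y^m) x (INR m * x^(pred m)).
Proof. apply derivable_pt_lim_pow. Qed.

Lemma dcomp (f g : R -> R) x lf lg :
  derivable_pt_lim f x lf -> derivable_pt_lim g (f x) lg ->
  derivable_pt_lim (fun y => g (f y)) x (lg * lf).
Proof. intros. apply (derivable_pt_lim_comp f g x lf lg); auto. Qed.

Lemma dL0ph n k a t : derivable_pt_lim (fun y => L0 k a (ph n y)) t (L1 k a (ph n t) * (2 * t^(2*n+1))).
Proof. apply dcomp. apply dph. apply dL0. Qed.
Lemma dL1ph n k a t : derivable_pt_lim (fun y => L1 k a (ph n y)) t (L2 k a (ph n t) * (2 * t^(2*n+1))).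
Proof. apply dcomp. apply dph. apply dL1. Qed.

Definition F0v n k a t := ee n t * L0 k a (ph n t).
Definition F1v n k a t := ee n t * (t^(2*n+1) * (2 * L1 k a (ph n t) - L0 k a (ph n t))).

Lemma dF0v n k a t : derivable_pt_lim (F0v n k a) t (F1v n k a t).
Proof.
  eapply dpl_ext. apply dmul. apply dee. apply dL0ph.
  intros; reflexivity. unfold F1v. ring.
Qed.

Lemma powP1 t n : t^(2*n+1) = t^(2*n) * t.
Proof. apply powS0. Qed.
Lemma powP2 t n : t^(2*n+2) = t^(2*n) * t * t.
Proof. rewrite powS2. simpl. ring. Qed.

Lemma dF1v n k t :
  let a := - / INR (2*n+2) in
  let E := 4 * INR k * (INR n + 1) + 2 * INR n + 1 in
  derivable_pt_lim (F1v n k a) t (t^(2*n) * (t^(2*n+2) - E) * F0v n k a t).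
Proof.
  intros a E.
  eapply dpl_ext.
  - apply dmul. apply dee. apply dmul. apply dpowt. apply dsub.
    apply (derivable_pt_lim_scal (fun y => L1 k a (ph n y))). apply dL1ph. apply dL0ph.
  - intros; reflexivity.
  - assert (Hode := laguerre_ode k a (ph n t)).
    unfold F0v.
    replace (pred (2*n+1)) with (2*n)%nat by lia.
    set (l0 := L0 k a (ph n t)) in *. set (l1 := L1 k a (ph n t)) in *. set (l2 := L2 k a (ph n t)) in *.
    assert (Hn := INRpos n).
    assert (Hid : ee n t * (t ^ (2 * n + 1) * (2 * l1 - l0)) * (- t ^ (2 * n + 1))
       + ee n t * (INR (2 * n + 1) * t ^ (2 * n) * (2 * l1 - l0) +
           t ^ (2 * n + 1) * (2 * (l2 * (2 * t ^ (2 * n + 1))) - l1 * (2 * t ^ (2 * n + 1))))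
       - t ^ (2 * n) * (t ^ (2 * n + 2) - E) * (ee n t * l0)
       = ee n t * t^(2*n) * 4 * INR (n+1) *
          (ph n t * l2 + (a + 1 - ph n t) * l1 + INR k * l0)).
    { unfold a, E, ph. rewrite !powP1, !powP2, INR2.
      replace (INR (2*n+1)) with (2 * INR n + 1) by (rewrite plus_INR, mult_INR; simpl; ring).
      replace (INR (n+1)) with (INR n + 1) by (rewrite plus_INR; simpl; ring).
      field. generalize (pos_INR n); lra. }
    rewrite Hode in Hid. unfold mult_real_fct. fold l1. lra.
Qed.

Definition F0w n k a t := ee n t * t * L0 k a (ph n t).
Definition F1w n k a t := ee n t * ((1 - t^(2*n+2)) * L0 k a (ph n t) + (2 * t^(2*n+2)) * L1 k a (ph n t)).

Lemma dF0w n k a t : derivable_pt_lim (F0w n k a) t (F1w n k a t).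
Proof.
  eapply dpl_ext. apply dmul. apply dmul. apply dee. apply derivable_pt_lim_id. apply dL0ph.
  intros; reflexivity. unfold F1w, id. set (X := ph n t). rewrite !powP1, !powP2. ring.
Qed.

Lemma dF1w n k t :
  let a := / INR (2*n+2) in
  let E := 4 * INR k * (INR n + 1) + 2 * INR n + 3 in
  derivable_pt_lim (F1w n k a) t (t^(2*n) * (t^(2*n+2) - E) * F0w n k a t).
Proof.
  intros a E.
  eapply dpl_ext.
  - apply dmul. apply dee. apply dadd. apply dmul. apply dsub. apply dcst. apply dpowt. apply dL0ph.
    apply dmul. apply dmul. apply dcst. apply dpowt. apply dL1ph.
  - intros; reflexivity.
  - assert (Hode := laguerre_ode k a (ph n t)).
    unfold F0w.
    replace (pred (2*n+2)) with (2*n+1)%nat by lia.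
    set (l0 := L0 k a (ph n t)) in *. set (l1 := L1 k a (ph n t)) in *. set (l2 := L2 k a (ph n t)) in *.
    match goal with |- ?L = ?R => assert (Hid : L - R = ee n t * t^(2*n+1) * 4 * INR (n+1) *
          (ph n t * l2 + (a + 1 - ph n t) * l1 + INR k * l0)) end.
    { unfold a, E, ph. rewrite !powP1, !powP2, !INR2.
      replace (INR (n+1)) with (INR n + 1) by (rewrite plus_INR; simpl; ring).
      field. generalize (pos_INR n); lra. }
    rewrite Hode in Hid. lra.
Qed.

Lemma exp_pow_n y m : exp y ^ m = exp (INR m * y).
Proof.
  induction m as [|m IH]. simpl. rewrite Rmult_0_l, exp_0. reflexivity.
  change (exp y ^ S m) with (exp y * exp y ^ m). rewrite IH, <- exp_plus, S_INR. f_equal; ring.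
Qed.

Lemma exp_poly_bound M x j : 1 <= x -> (j <= M)%nat ->
  exp (- x / 2) * x^j <= (2 * INR M + 2)^(M+1) / x.
Proof.
  intros Hx Hj.
  set (q := 2 * INR M + 2).
  assert (Hq : 0 < q) by (unfold q; generalize (pos_INR M); lra).
  assert (He : (x / q)^(M+1) <= exp (x/2)).
  { replace (x/2) with (INR (M+1) * (x / q)).
    - rewrite <- exp_pow_n. apply pow_incr. split.
      + apply Rlt_le, Rdiv_lt_0_compat; lra.
      + assert (H := exp_ineq1 (x/q)). assert (0 < x/q) by (apply Rdiv_lt_0_compat; lra).
        assert (x / q <> 0) by lra. specialize (H H1). lra.
    - unfold q. rewrite plus_INR. simpl. field. generalize (pos_INR M); lra. }
  assert (Hxj : x^j <= x^M).
  { apply Rle_pow; auto. }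
  assert (HxM : x^(M+1) = x^M * x) by (rewrite pow_add; simpl; ring).
  assert (0 < x^M) by (apply pow_lt; lra).
  unfold Rdiv in He; rewrite Rpow_mult_distr, pow_inv in He.
  assert (0 < q^(M+1)) by (apply pow_lt; lra).
  assert (Hexp : exp (- x / 2) = / exp (x/2)).
  { rewrite <- exp_Ropp. f_equal. field. }
  rewrite Hexp.
  assert (0 < exp (x/2)) by apply exp_pos.
  apply Rmult_le_reg_l with (exp (x/2) * x); [nra|].
  replace (exp (x / 2) * x * (/ exp (x / 2) * x ^ j)) with (x * x^j) by (field; lra).
  replace (exp (x / 2) * x * (q ^ (M + 1) / x)) with (exp (x/2) * q^(M+1)) by (field; lra).
  assert (x^(M+1) <= exp (x/2) * q^(M+1)).
  { apply Rmult_le_reg_r with (/ q^(M+1)). apply Rinv_0_lt_compat; lra.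
    rewrite Rmult_assoc, Rinv_r, Rmult_1_r by lra. exact He. }
  assert (x * x^j <= x^(M+1)) by (rewrite HxM; nra).
  lra.
Qed.

Lemma sum_decay (be : nat -> R) m s x : 1 <= x -> (s <= 1)%nat ->
  exp (- x / 2) * Rabs (sum_f_R0 (fun i => be i * x^(i+s)) m)
  <= sum_f_R0 (fun i => Rabs (be i)) m * ((2 * INR (m+1) + 2)^(m+1+1) / x).
Proof.
  intros Hx Hs.
  assert (He : 0 < exp (- x / 2)) by apply exp_pos.
  apply Rle_trans with (exp (- x/2) * sum_f_R0 (fun i => Rabs (be i * x^(i+s))) m).
  { apply Rmult_le_compat_l; [lra|]. apply Rabs_triang_gen. }
  rewrite scal_sum. rewrite (Rmult_comm (sum_f_R0 _ m)), scal_sum.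
  apply sum_Rle. intros i Hi.
  rewrite Rabs_mult, (Rabs_right (x^(i+s))) by (apply Rle_ge, pow_le; lra).
  assert (H := exp_poly_bound (m+1) x (i+s) Hx ltac:(lia)).
  assert (0 <= Rabs (be i)) by apply Rabs_pos.
  replace (Rabs (be i) * x ^ (i + s) * exp (- x / 2)) with (Rabs (be i) * (exp (- x/2) * x^(i+s))) by ring.
  apply Rmult_le_compat_l; auto.
Qed.

Definition Fs n k a s t := ee n t * t^s * L0 k a (ph n t).

Lemma ee_ph n t : ee n t = exp (- ph n t / 2).
Proof. unfold ee, ph. f_equal. rewrite INR2. assert (H := INRpos n). field. lra. Qed.

Lemma pow_even_abs t n : t^(2*n+2) = Rabs t ^(2*n+2).
Proof.
  replace (2*n+2)%nat with (2*(n+1))%nat by lia. rewrite !pow_mult.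
  f_equal. rewrite <- pow2_abs. reflexivity.
Qed.

Lemma decay_Fs n k a s c : (s <= 1)%nat ->
  forall eps, 0 < eps -> exists B, forall t, B <= Rabs t -> Rabs (c * Fs n k a s t) < eps.
Proof.
  intros Hs eps Heps.
  set (K := sum_f_R0 (fun i => Rabs (alpha k a i)) k * (2 * INR (k+1) + 2)^(k+1+1)).
  assert (HK : 0 <= K).
  { unfold K. apply Rmult_le_pos.
    - apply cond_pos_sum. intros; apply Rabs_pos.
    - apply pow_le. generalize (pos_INR (k+1)); lra. }
  assert (Hn := INRpos n).
  set (A := Rabs c * K * INR (n+1) * INR (n+1)).
  assert (HA : 0 <= A).
  { unfold A. assert (0 <= Rabs c) by apply Rabs_pos. 
    apply Rmult_le_pos; [|lra]. apply Rmult_le_pos; [|lra]. nra. }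
  exists (INR (n+1) + A / eps + 1).
  intros t Ht.
  assert (HAe : 0 <= A / eps) by (apply Rdiv_le_0_compat; lra).
  assert (n1 : 1 <= INR (n+1)) by (rewrite plus_INR; simpl; generalize (pos_INR n); lra).
  assert (Ht1 : 1 <= Rabs t) by lra.
  set (x := ph n t).
  assert (Htx : Rabs t <= INR (n+1) * x).
  { unfold x, ph. rewrite pow_even_abs. field_simplify; [|lra].
    replace (Rabs t) with (Rabs t ^ 1) at 1 by ring. apply Rle_pow; auto. lia. }
  assert (Hx1 : 1 <= x).
  { apply Rmult_le_reg_l with (INR (n+1)); [lra|]. nra. }
  assert (Hts : Rabs t ^ s <= INR (n+1) * x^s).
  { destruct s as [|[|s']]; [simpl; lra | simpl; lra | lia]. }
  assert (Hsum := sum_decay (alpha k a) k s x Hx1 Hs).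
  assert (Hsx : x^s * L0 k a x = sum_f_R0 (fun i => alpha k a i * x^(i+s)) k).
  { unfold L0. rewrite scal_sum. apply sum_eq. intros. rewrite pow_add. ring. }
  rewrite <- Hsx in Hsum.
  unfold Fs. fold x. rewrite ee_ph. fold x.
  rewrite !Rabs_mult, (Rabs_right (exp _)) by (apply Rle_ge, Rlt_le, exp_pos).
  rewrite <- RPow_abs.
  assert (He := exp_pos (- x / 2)).
  assert (HL := Rabs_pos (L0 k a x)).
  assert (Hc := Rabs_pos c).
  assert (B1 : exp (- x / 2) * Rabs t ^ s * Rabs (L0 k a x) <= INR (n+1) * (K / x)).
  { rewrite Rabs_mult in Hsum. rewrite (Rabs_right (x^s)) in Hsum by (apply Rle_ge, pow_le; lra).
    fold K in Hsum. unfold K. unfold Rdiv in *.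
    assert (0 <= Rabs t ^ s) by (apply pow_le, Rabs_pos).
    assert (exp (- x / 2) * Rabs t ^ s * Rabs (L0 k a x) <= exp (- x/2) * (INR (n+1) * x^s) * Rabs (L0 k a x)).
    { apply Rmult_le_compat_r; auto. apply Rmult_le_compat_l; lra. }
    assert (exp (- x/2) * (INR (n+1) * x^s) * Rabs (L0 k a x) = INR (n+1) * (exp (- x * / 2) * (x^s * Rabs (L0 k a x)))) by (unfold Rdiv; ring).
    assert (exp (- x * / 2) * (x ^ s * Rabs (L0 k a x)) <= K * / x) by (unfold K; unfold Rdiv in Hsum; lra).
    unfold Rdiv in *. nra. }
  assert (B2 : K / x <= K * INR (n+1) / Rabs t).
  { unfold Rdiv. rewrite Rmult_assoc. apply Rmult_le_compat_l; auto.
    apply Rmult_le_reg_l with (x * Rabs t); [nra|].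
    replace (x * Rabs t * / x) with (Rabs t) by (field; lra).
    replace (x * Rabs t * (INR (n + 1) * / Rabs t)) with (INR (n+1) * x) by (field; lra). lra. }
  assert (B3 : Rabs c * (INR (n+1) * (K * INR (n+1) / Rabs t)) = A / Rabs t).
  { unfold A. field. lra. }
  assert (B4 : A / Rabs t < eps).
  { destruct (Req_dec A 0) as [A0|A0].
    - rewrite A0. unfold Rdiv. rewrite Rmult_0_l. auto.
    - apply Rmult_lt_reg_r with (Rabs t); [lra|].
      replace (A / Rabs t * Rabs t) with A by (field; lra).
      assert (A / eps < Rabs t) by lra.
      apply Rmult_lt_reg_r with (/ eps). apply Rinv_0_lt_compat; lra.
      replace (eps * Rabs t * / eps) with (Rabs t) by (field; lra). exact H. }
  assert (Rabs c * (exp (- x / 2) * Rabs t ^ s * Rabs (L0 k a x)) <= Rabs c * (INR (n+1) * (K * INR (n+1) / Rabs t))).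
  { apply Rmult_le_compat_l; auto. eapply Rle_trans; [exact B1|]. apply Rmult_le_compat_l; lra. }
  replace (Rabs c * (exp (- x / 2) * Rabs t ^ s * Rabs (L0 k a x))) with
    (Rabs c * exp (- x / 2) * Rabs t ^ s * Rabs (L0 k a x)) in H by ring.
  lra.
Qed.

Lemma apply_core n E (f f1 : R -> R) :
  1 <= E ->
  (forall x, derivable_pt_lim f x (f1 x)) ->
  (forall x, derivable_pt_lim f1 x (x^(2*n) * (x^(2*n+2) - E) * f x)) ->
  L2_normalized (fun t => t^n * f t) ->
  (forall s, (f (-s))^2 = (f s)^2) ->
  (forall eps, 0 < eps -> exists B, forall s, B <= Rabs s -> Rabs (f s) < eps) ->
  forall t, Rabs (f t) <= Kc n * E.
Proof.
  intros HE D1 D2 HL Hev Hdec.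
  apply (core n E f f1 (fun x => x^(2*n) * (x^(2*n+2) - E) * f x)); auto.
  intros u v Huv. apply (RInt_gen_bound _ 1 u v); auto.
  - intros x. apply (ex_derive_continuous (K:=R_AbsRing) (V:=R_NormedModule)). auto_derive. repeat split; auto.
    exists (f1 x). apply is_derive_Reals. apply D1.
  - intros x. apply pow2_ge_0.
Qed.

Lemma neg_pow_even n s : (- s)^(2*n+2) = s^(2*n+2).
Proof. rewrite pow_even_abs, (pow_even_abs s), Rabs_Ropp. reflexivity. Qed.

Lemma Ek_R n k : Ek n k = 4 * INR k * (INR n + 1) + 2 * INR n + 1.
Proof. unfold Ek. repeat rewrite ?plus_INR, ?mult_INR. simpl. ring. Qed.

Lemma Ek_ge1 n k : 1 <= Ek n k.
Proof. rewrite Ek_R. generalize (pos_INR k) (pos_INR n). intros. nra. Qed.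

Lemma bound_v n k c : L2_normalized (fun t => t ^ n * (c * v_unnorm n k t)) ->
  forall t, Rabs (c * v_unnorm n k t) <= Kc n * Ek n k.
Proof.
  intros HL.
  set (a := - / INR (2*n+2)).
  assert (Hf : forall t, c * v_unnorm n k t = c * F0v n k a t).
  { intros t. unfold v_unnorm, F0v, ee, ph. rewrite laguerre_L0. reflexivity. }
  apply (apply_core n (Ek n k) (fun t => c * v_unnorm n k t) (fun t => c * F1v n k a t)).
  - apply Ek_ge1.
  - intros x. eapply dpl_ext. apply (derivable_pt_lim_scal (F0v n k a) c x). apply dF0v.
    intros y. unfold mult_real_fct. rewrite Hf. reflexivity. reflexivity.
  - intros x. eapply dpl_ext. apply (derivable_pt_lim_scal (F1v n k a) c x). apply dF1v.
    intros y. reflexivity. rewrite Hf, Ek_R. fold a. ring.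
  - exact HL.
  - intros s. unfold v_unnorm. rewrite neg_pow_even. reflexivity.
  - intros eps Heps. destruct (decay_Fs n k a 0 c ltac:(lia) eps Heps) as [B HB].
    exists B. intros s Hs. rewrite Hf. specialize (HB s Hs). unfold Fs in HB. unfold F0v.
    simpl pow in HB. rewrite Rmult_1_r in HB. exact HB.
Qed.

Lemma bound_w n k d : L2_normalized (fun t => t ^ n * (d * w_unnorm n k t)) ->
  forall t, Rabs (d * w_unnorm n k t) <= Kc n * (Ek n k + 2).
Proof.
  intros HL.
  set (a := / INR (2*n+2)).
  assert (Hf : forall t, d * w_unnorm n k t = d * F0w n k a t).
  { intros t. unfold w_unnorm, F0w, ee, ph. rewrite laguerre_L0. reflexivity. }
  apply (apply_core n (Ek n k + 2) (fun t => d * w_unnorm n k t) (fun t => d * F1w n k a t)).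
  - generalize (Ek_ge1 n k); lra.
  - intros x. eapply dpl_ext. apply (derivable_pt_lim_scal (F0w n k a) d x). apply dF0w.
    intros y. unfold mult_real_fct. rewrite Hf. reflexivity. reflexivity.
  - intros x. eapply dpl_ext. apply (derivable_pt_lim_scal (F1w n k a) d x). apply dF1w.
    intros y. reflexivity. rewrite Hf, Ek_R. fold a. ring.
  - exact HL.
  - intros s. unfold w_unnorm. rewrite neg_pow_even. ring.
  - intros eps Heps. destruct (decay_Fs n k a 1 d ltac:(lia) eps Heps) as [B HB].
    exists B. intros s Hs. rewrite Hf. specialize (HB s Hs). unfold Fs in HB. unfold F0w.
    simpl pow in HB. rewrite Rmult_1_r in HB. exact HB.
Qed.

Theorem proposition5p2 (n : nat) (c d : nat -> R) :
  (forall k, 0 < c k) -> (forall k, 0 < d k) ->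
  (forall k, L2_normalized (fun t => t ^ n * (c k * v_unnorm n k t))) ->
  (forall k, L2_normalized (fun t => t ^ n * (d k * w_unnorm n k t))) ->
  exists C0 : R, 0 < C0 /\
    forall k : nat, forall t : R,
      Rabs (c k * v_unnorm n k t) <= C0 * Rpower (Ek n k) (3 / 2 + / INR (4 * n + 4)) /\
      Rabs (d k * w_unnorm n k t) <= C0 * Rpower (Ek n k) (3 / 2 + / INR (4 * n + 4)).
Proof.
  intros Hc Hd Hv Hw.
  assert (HK := Kc_ge1 n).
  exists (3 * Kc n). split; [lra|].
  intros k t.
  assert (HE := Ek_ge1 n k).
  assert (HP : Ek n k <= Rpower (Ek n k) (3 / 2 + / INR (4 * n + 4))).
  { rewrite <- (Rpower_1 (Ek n k)) at 1 by lra. apply Rle_Rpower; auto.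
    assert (0 < / INR (4*n+4)) by (apply Rinv_0_lt_compat, lt_0_INR; lia). lra. }
  assert (H1 := bound_v n k (c k) (Hv k) t).
  assert (H2 := bound_w n k (d k) (Hw k) t).
  split.
  - assert (Kc n * Ek n k <= 3 * Kc n * Rpower (Ek n k) (3 / 2 + / INR (4 * n + 4))) by nra. lra.
  - assert (Kc n * (Ek n k + 2) <= 3 * Kc n * Rpower (Ek n k) (3 / 2 + / INR (4 * n + 4))) by nra. lra.
Qed.
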